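(* For every bounded set $X\subseteq\mathbb{R}^d$ we have $\mathrm{Flt}_d(X)\le\mathrm{Flt}^{\mathbb{R}}_d(X+[0,1]^d)$, where $X+[0,1]^d$ is the Minkowski sum.
   Context: Convex body: non-empty compact convex subset of $\mathbb{R}^d$; $\mathrm{width}(K)=\min_{u\in(\mathbb{Z}^d)^*\setminus\{0\}}\max_{x,y\in K}|u(x)-u(y)|$. A unimodular (resp. $\mathbb{R}$-unimodular) copy of $Y\subseteq\mathbb{R}^d$ is $\{Ay+b:y\in Y\}$ with $A\in\mathrm{GL}(d,\mathbb{Z})$ and $b\in\mathbb{Z}^d$ (resp. $b\in\mathbb{R}^d$). For bounded $X$: $\mathrm{Flt}_d(X)=\sup\{\mathrm{width}(K): K\text{ convex body not containing a unimodular copy of }X\}$ and $\mathrm{Flt}^{\mathbb{R}}_d(X)=\sup\{\mathrm{width}(K): K\text{ convex body not containing an }\mathbb{R}\text{-unimodular copy of }X\}$ (values in $[0,\infty]$). *)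

(* Defs.v *)
From Stdlib Require Import Reals ZArith.
From Stdlib Require Vectors.Fin.
Open Scope R_scope.

Definition vec (d : nat) := Fin.t d -> R.
Definition ivec (d : nat) := Fin.t d -> Z.
Definition imat (d : nat) := Fin.t d -> Fin.t d -> Z.

Fixpoint fsum (d : nat) : (Fin.t d -> R) -> R :=
  match d return (Fin.t d -> R) -> R with
  | O => fun _ => 0
  | S n => fun f => f Fin.F1 + fsum n (fun i => f (Fin.FS i))
  end.

Definition dual_eval {d : nat} (u : ivec d) (x : vec d) : R :=
  fsum d (fun i => IZR (u i) * x i).

Definition convex_set {d : nat} (K : vec d -> Prop) : Prop :=
  forall x y t, K x -> K y -> 0 <= t <= 1 ->
    K (fun i => t * x i + (1 - t) * y i).

Definition bounded_set {d : nat} (K : vec d -> Prop) : Prop :=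
  exists M, forall x, K x -> forall i, Rabs (x i) <= M.

Definition closed_set {d : nat} (K : vec d -> Prop) : Prop :=
  forall (xs : nat -> vec d) (x : vec d),
    (forall n, K (xs n)) -> (forall i, Un_cv (fun n => xs n i) (x i)) -> K x.

(* compact_set in R^d = closed_set and bounded_set (Heine-Borel) *)
Definition compact_set {d : nat} (K : vec d -> Prop) : Prop := closed_set K /\ bounded_set K.

Definition convex_body {d : nat} (K : vec d -> Prop) : Prop :=
  (exists x, K x) /\ compact_set K /\ convex_set K.

Definition width_along {d : nat} (K : vec d -> Prop) (u : ivec d) (m : R) : Prop :=
  is_lub (fun r => exists x y, K x /\ K y /\ r = Rabs (dual_eval u x - dual_eval u y)) m.

Definition nonzero {d : nat} (u : ivec d) : Prop := exists i, u i <> 0%Z.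

Definition lattice_width {d : nat} (K : vec d -> Prop) (w : R) : Prop :=
  (exists u, nonzero u /\ width_along K u w) /\
  (forall u m, nonzero u -> width_along K u m -> w <= m).

Definition idx_eq {d : nat} (i j : Fin.t d) : R :=
  if Fin.eq_dec i j then 1 else 0.

Definition GLZ {d : nat} (A : imat d) : Prop :=
  exists B : imat d,
    (forall i k, fsum d (fun j => IZR (A i j) * IZR (B j k)) = idx_eq i k) /\
    (forall i k, fsum d (fun j => IZR (B i j) * IZR (A j k)) = idx_eq i k).

Definition affine_image {d : nat} (A : imat d) (b : vec d) (y : vec d) : vec d :=
  fun i => fsum d (fun j => IZR (A i j) * y j) + b i.

Definition contains_unimodular_copy {d : nat} (K Y : vec d -> Prop) : Prop :=
  exists (A : imat d) (b : ivec d), GLZ A /\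
    forall y, Y y -> K (affine_image A (fun i => IZR (b i)) y).

Definition contains_R_unimodular_copy {d : nat} (K Y : vec d -> Prop) : Prop :=
  exists (A : imat d) (b : vec d), GLZ A /\
    forall y, Y y -> K (affine_image A b y).

(* ---- flatness constants, as sets of attained widths ---- *)
Definition Flt_widths (d : nat) (X : vec d -> Prop) (w : R) : Prop :=
  exists K, convex_body K /\ ~ contains_unimodular_copy K X /\ lattice_width K w.

Definition FltR_widths (d : nat) (X : vec d -> Prop) (w : R) : Prop :=
  exists K, convex_body K /\ ~ contains_R_unimodular_copy K X /\ lattice_width K w.

(* sup A <= sup B in [0, +oo], with sup of the empty set = 0:
   every a in A is <= sup B in [0,+oo]. *)
Definition esup_le (A B : R -> Prop) : Prop :=
  forall a, A a -> forall c, c < a -> c < 0 \/ exists b, B b /\ c < b.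

Definition minkowski_cube {d : nat} (X : vec d -> Prop) : vec d -> Prop :=
  fun z => exists x y, X x /\ (forall i, 0 <= y i <= 1) /\ (forall i, z i = x i + y i).

(* Main.v *)
Require Import Defs.
From Stdlib Require Import Reals ZArith Lra FunctionalExtensionality.
From Stdlib Require Vectors.Fin.
Open Scope R_scope.

Lemma fsum_ext d (f g : Fin.t d -> R) : (forall i, f i = g i) -> fsum d f = fsum d g.
Proof.
  induction d; simpl; intros H; auto.
  rewrite H, (IHd (fun i => f (Fin.FS i)) (fun i => g (Fin.FS i))); auto.
Qed.

Lemma fsum_plus d (f g : Fin.t d -> R) : fsum d (fun i => f i + g i) = fsum d f + fsum d g.
Proof.
  induction d; simpl; [lra|].
  rewrite (IHd (fun i => f (Fin.FS i)) (fun i => g (Fin.FS i))); lra.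
Qed.

Lemma fsum_scal d c (f : Fin.t d -> R) : fsum d (fun i => c * f i) = c * fsum d f.
Proof.
  induction d; simpl; [lra|].
  rewrite (IHd (fun i => f (Fin.FS i))); lra.
Qed.

Lemma fsum_zero d : fsum d (fun _ => 0) = 0.
Proof. induction d; simpl; auto; rewrite IHd; lra. Qed.

Lemma fsum_swap n m (F : Fin.t n -> Fin.t m -> R) :
  fsum n (fun j => fsum m (fun k => F j k)) = fsum m (fun k => fsum n (fun j => F j k)).
Proof.
  induction n; simpl.
  - rewrite fsum_zero; auto.
  - rewrite (IHn (fun j k => F (Fin.FS j) k)).
    rewrite <- fsum_plus. reflexivity.
Qed.

Lemma fsum_delta d (i : Fin.t d) (b : Fin.t d -> R) :
  fsum d (fun k => idx_eq i k * b k) = b i.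
Proof.
  induction d.
  - inversion i.
  - revert b. apply (Fin.caseS' i); clear i; intros; simpl.
    + unfold idx_eq at 1. destruct (Fin.eq_dec Fin.F1 Fin.F1) as [_|n]; [|congruence].
      rewrite (fsum_ext _ _ (fun _ => 0)); [rewrite fsum_zero; lra|].
      intros k. unfold idx_eq. destruct (Fin.eq_dec Fin.F1 (Fin.FS k)) as [e|_];
        [discriminate e|lra].
    + unfold idx_eq at 1. destruct (Fin.eq_dec (Fin.FS p) Fin.F1) as [e|_]; [discriminate e|].
      rewrite <- (IHd p (fun k => b (Fin.FS k))).
      transitivity (0 + fsum d (fun k => idx_eq p k * b (Fin.FS k))); [|lra].
      f_equal; [lra|]. apply fsum_ext; intros k. f_equal.
      unfold idx_eq. destruct (Fin.eq_dec (Fin.FS p) (Fin.FS k)) as [e|ne];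
        destruct (Fin.eq_dec p k) as [e'|ne']; auto.
      * apply Fin.FS_inj in e; contradiction.
      * subst; contradiction.
Qed.

Fixpoint zsum (d : nat) : (Fin.t d -> Z) -> Z :=
  match d return (Fin.t d -> Z) -> Z with
  | O => fun _ => 0%Z
  | S n => fun f => (f Fin.F1 + zsum n (fun i => f (Fin.FS i)))%Z
  end.

Lemma zsum_IZR d f : IZR (zsum d f) = fsum d (fun i => IZR (f i)).
Proof.
  induction d; simpl; auto. rewrite plus_IZR, IHd; auto.
Qed.

Theorem mainTheorem8 (d : nat) (X : vec d -> Prop) (hX : bounded_set X) :
  esup_le (Flt_widths d X) (FltR_widths d (minkowski_cube X)).
Proof.
  intros a [K [HK [Hnc Hw]]] c Hc. right. exists a. split; [|lra].
  exists K. split; [exact HK|]. split; [|exact Hw].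
  intros [A [b [HA HK']]]. apply Hnc.
  destruct HA as [B [HAB HBA]].
  set (cv := fun i => fsum d (fun j => IZR (B i j) * b j)).
  set (z := fun i => up (cv i)).
  set (yv := fun i => IZR (z i) - cv i).
  exists A, (fun i => zsum d (fun j => (A i j * z j)%Z)).
  split; [exists B; split; auto|].
  intros x Hx.
  assert (Hm : minkowski_cube X (fun i => x i + yv i)).
  { exists x, yv. split; [exact Hx|]. split; [|auto].
    intros i. unfold yv, z. destruct (archimed (cv i)); lra. }
  specialize (HK' _ Hm).
  replace (affine_image A (fun i => IZR (zsum d (fun j => (A i j * z j)%Z))) x)
    with (affine_image A b (fun i => x i + yv i)); [exact HK'|].
  apply functional_extensionality; intros i. unfold affine_image.
  rewrite zsum_IZR.
  rewrite (fsum_ext _ _ (fun j => IZR (A i j) * x j + IZR (A i j) * yv j))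
    by (intros; ring).
  rewrite fsum_plus.
  assert (E : fsum d (fun j => IZR (A i j) * yv j) + b i
              = fsum d (fun j => IZR (A i j * z j))); [|lra].
  unfold yv.
  assert (E1 : fsum d (fun j => IZR (A i j) * (IZR (z j) - cv j)) =
     fsum d (fun j => IZR (A i j * z j) + (- (IZR (A i j) * cv j)))).
  { apply fsum_ext; intros j. rewrite mult_IZR. ring. }
  rewrite E1.
  rewrite fsum_plus.
  assert (E2 : fsum d (fun j => IZR (A i j) * cv j) = b i); [|
    rewrite (fsum_ext _ (fun j => - (IZR (A i j) * cv j)) (fun j => -1 * (IZR (A i j) * cv j))) by (intros; ring);
    rewrite fsum_scal; lra].
  unfold cv.
  rewrite (fsum_ext _ _ (fun j => fsum d (fun k => IZR (A i j) * IZR (B j k) * b k)))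
    by (intros; rewrite <- fsum_scal; apply fsum_ext; intros; ring).
  rewrite fsum_swap.
  rewrite (fsum_ext _ _ (fun k => idx_eq i k * b k)).
  - apply fsum_delta.
  - intros k. rewrite <- HAB.
    rewrite (fsum_ext _ _ (fun j => b k * (IZR (A i j) * IZR (B j k)))) by (intros; ring).
    rewrite fsum_scal; lra.
Qed.
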